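(* Let $q\in(0,1)$ and let $\mathbf X_1,\mathbf X_2,\dots$ be i.i.d. random vectors in $\mathbb R^n$ with nonnegative components, distributed as $\mathbf X$, whose log moment generating function $\Lambda(\boldsymbol\lambda)=\log\mathbb E[e^{\langle\boldsymbol\lambda,\mathbf X\rangle}]$ is finite for all $\boldsymbol\lambda\in\mathbb R^n$. Then for every $\delta>0$, $$\lim_{t\to\infty}\frac1t\log\mathsf P\Big(\frac1t\sum_{i=1}^t q^i\mathbf X_i\ge\delta\mathbf 1\Big)=-\infty,$$ where $\mathbf 1$ is the all-ones vector and $\mathbf x\ge\mathbf y$ means $x_j\ge y_j$ for every component $j$. *)

(* Defs.v *)
From HB Require Import structures.
From mathcomp Require Import all_boot all_order all_algebra.
From mathcomp Require Import all_classical all_reals all_analysis.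
Set Implicit Arguments. Unset Strict Implicit. Unset Printing Implicit Defensive.
Import Order.TTheory GRing.Theory Num.Theory.
Local Open Scope classical_set_scope.
Local Open Scope ring_scope.

Section Defs.
Context {d : measure_display} {T : measurableType d} {R : realType} {n : nat}.

Definition rvec_measurable (X : T -> 'I_n -> R) : Prop :=
  forall j : 'I_n, measurable_fun setT (fun x => X x j).

Definition vec_event (X : T -> 'I_n -> R) (B : 'I_n -> set R) : set T :=
  [set x | forall j : 'I_n, B j (X x j)].

(* Mutual independence of the random vectors (X i)_{i : nat}: product rule over
   every finite family of indices, for all Borel boxes (a pi-system generating
   the Borel sigma-algebra of R^n). *)
Definition rvec_indep (P : probability T R) (X : nat -> T -> 'I_n -> R) : Prop :=
  forall (s : seq nat) (B : nat -> 'I_n -> set R),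
    uniq s -> (forall i j, measurable (B i j)) ->
    P (\bigcap_(i in [set i | i \in s]) vec_event (X i) (B i)) =
    (\prod_(i <- s) P (vec_event (X i) (B i)))%E.

Definition rvec_same_law (P : probability T R) (Y X : T -> 'I_n -> R) : Prop :=
  forall B : 'I_n -> set R, (forall j, measurable (B j)) ->
    P (vec_event Y B) = P (vec_event X B).

Definition mgf_finite (P : probability T R) (X : T -> 'I_n -> R) : Prop :=
  forall lam : 'I_n -> R,
    (\int[P]_x (expR (\sum_(j < n) lam j * X x j))%:E < +oo)%E.

End Defs.

(* Main.v *)
Require Import Defs.
From HB Require Import structures.
From mathcomp Require Import all_boot all_order all_algebra.
From mathcomp Require Import all_classical all_reals all_analysis.
From mathcomp Require Import ring lra measurable_realfun.
Import Order.TTheory GRing.Theory Num.Theory.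
Local Open Scope classical_set_scope.
Local Open Scope ring_scope.

Lemma meas_ge (d : measure_display) (T : measurableType d) (R : realType)
  (f : T -> R) (a : R) : measurable_fun setT f -> measurable [set x | a <= f x].
Proof.
move=> mf; have := mf measurableT `[a, +oo[%classic (measurable_itv _).
rewrite setTI; congr measurable; apply/seteqP; split => x /=;
  by rewrite in_itv /= andbT.
Qed.

Lemma tail_bound (d : measure_display) (T : measurableType d) (R : realType)
  (P : probability T R) (Y : T -> R) (mY : measurable_fun setT Y) (th a : R) :
  0 < th ->
  (P [set x | (a <= Y x)%R] <=
    (\int[P]_x (expR (th * Y x))%:E) * (expR (- (th * a)))%:E)%E.
Proof.
move=> th0; have := chernoff (mfun_Sub (mem_set mY : Y \in mfun)) a th0.
rewrite /mmt_gen_fun unlock /=.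
move=> /(_ P) h; apply: (le_trans h); rewrite le_eqVlt; apply/orP; left; apply/eqP.
congr (_ * _)%E; apply: eq_integral => x _; by rewrite mulrC.
Qed.

Lemma geom_sum (R : realType) (q : R) (t : nat) :
  (1 - q) * \sum_(i < t) q ^+ i = 1 - q ^+ t.
Proof.
elim: t => [|t IH]; first by rewrite big_ord0 mulr0 expr0 subrr.
by rewrite big_ord_recr /= mulrDr IH exprS; ring.
Qed.

(* X i stands for the paper's X_{i+1}; X0 is the generic vector X. *)
Theorem lemma5 (d : measure_display) (T : measurableType d) (R : realType)
  (P : probability T R) (n : nat) (hn : (0 < n)%N)
  (q : R) (hq0 : 0 < q) (hq1 : q < 1)
  (X : nat -> T -> 'I_n -> R) (X0 : T -> 'I_n -> R)
  (hXm : forall i, rvec_measurable (X i)) (hX0m : rvec_measurable X0)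
  (hXnn : forall i x j, 0 <= X i x j)
  (hind : rvec_indep P X)
  (hlaw : forall i, rvec_same_law P (X i) X0)
  (hmgf : mgf_finite P X0)
  (delta : R) (hdelta : 0 < delta) :
  (fun t : nat =>
     ((t%:R)^-1)%:E *
     lne (P [set x | forall j : 'I_n,
             (delta <= (t%:R)^-1 * \sum_(i < t) q ^+ i.+1 * X i x j)%R]))%E
    @ \oo --> -oo%E.
Proof.
pose j0 : 'I_n := Ordinal hn.
pose s := delta * (1 - q) / q.
have s0 : 0 < s by rewrite /s divr_gt0 // mulr_gt0 // subr_gt0.
apply/cvgeNyPle => A.
pose th := (`|A| + 2) / s.
have th0 : 0 < th by rewrite /th divr_gt0 // ltr_wpDl.
pose I := (\int[P]_x (expR (th * X0 x j0))%:E)%E.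
have I0 : (0 <= I)%E by apply: integral_ge0 => x _; rewrite lee_fin expR_ge0.
have Ifin : I \is a fin_num.
  rewrite ge0_fin_numE //.
  have := hmgf (fun j => if j == j0 then th else 0).
  congr (_ < _)%E; apply: eq_integral => x _; congr (_%:E); congr expR.
  rewrite (bigD1 j0) //= big1 ?addr0 // => j /negPf ->; by rewrite mul0r.
pose C := fine I.
have C0 : 0 <= C by rewrite /C fine_ge0.
have tailk : forall k (a : R),
    (P [set x | (a <= X k x j0)%R] <= (C * expR (- (th * a)))%:E)%E.
  move=> k a.
  have -> : P [set x | a <= X k x j0] = P [set x | a <= X0 x j0].
    pose B := fun j : 'I_n => if j == j0 then `[a, +oo[%classic else setT.
    have mB : forall j, measurable (B j).
      by move=> j; rewrite /B; case: ifP => _.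
    have E : forall Y : T -> 'I_n -> R,
        vec_event Y B = [set x | a <= Y x j0].
      move=> Y; apply/seteqP; split => x /=.
        by move=> /(_ j0); rewrite /B eqxx /= in_itv /= andbT.
      move=> h j; rewrite /B; case: eqP => [->|_] //=.
      by rewrite in_itv /= andbT.
    by rewrite -!E; apply: hlaw.
  apply: le_trans; first exact: (@tail_bound _ _ _ P _ (hX0m j0) th a th0).
  by rewrite -/I -(fineK Ifin) -EFinM.
have [N CN] : exists N : nat, C < N%:R.
  by exists (Num.Def.archi_bound C); apply: archi_boundP.
exists (maxn 1 N) => // t /= Ht.
have t1 : (1 <= t)%N by apply: leq_trans Ht; rewrite leq_maxl.
have NT : (N <= t)%N by apply: leq_trans Ht; rewrite leq_maxr.
have tpos : 0 < t%:R :> R by rewrite ltr0n.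
have CT : C < t%:R by apply: (lt_le_trans CN); rewrite ler_nat.
set E := [set x | _].
have mg : forall j, measurable_fun setT
    (fun x => t%:R^-1 * \sum_(i < t) q ^+ i.+1 * X i x j).
  move=> j; apply: measurable_funM; first exact: measurable_cst.
  apply: measurable_sum => i; apply: measurable_funM;
    [exact: measurable_cst | exact: hXm].
have mE : measurable E.
  have -> : E = \bigcap_(j in [set: 'I_n])
      [set x | delta <= t%:R^-1 * \sum_(i < t) q ^+ i.+1 * X i x j].
    by apply/seteqP; split => x /= h j; [move=> _|]; apply: h.
  apply: fin_bigcap_measurable; first exact: finite_finset.
  by move=> j _; apply: meas_ge.
pose F := fun k => [set x | t%:R * s <= X k x j0].
have mF : forall k, measurable (F k) by move=> k; apply: meas_ge; apply: hXm.
have sub : E `<=` \big[setU/set0]_(k < t) F k.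
  move=> x Ex; rewrite -bigcup_mkord; apply: contrapT => hno.
  have lt : forall k, (k < t)%N -> X k x j0 < t%:R * s.
    move=> k kt; rewrite ltNge; apply/negP => h; apply: hno; by exists k.
  have h1 : t%:R * delta <= \sum_(i < t) q ^+ i.+1 * X i x j0.
    have := ler_wpM2l (ltW tpos) (Ex j0).
    by rewrite mulrA mulfV ?mul1r // gt_eqF.
  have h2 : \sum_(i < t) q ^+ i.+1 * X i x j0 <=
            \sum_(i < t) q ^+ i.+1 * (t%:R * s).
    apply: ler_sum => i _; apply: ler_wpM2l; first exact: exprn_ge0 (ltW hq0).
    exact: ltW (lt _ (ltn_ord i)).
  have h3 : \sum_(i < t) q ^+ i.+1 * (t%:R * s) =
            t%:R * delta * (1 - q ^+ t).
    transitivity ((t%:R * s * q) * \sum_(i < t) q ^+ i).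
      rewrite mulr_sumr; apply: eq_bigr => i _; rewrite exprS; ring.
    rewrite -geom_sum /s; field; by rewrite gt_eqF.
  have h4 : 0 < q ^+ t by exact: exprn_gt0.
  have h5 : 0 < t%:R * delta by exact: mulr_gt0.
  have : t%:R * delta <= t%:R * delta * (1 - q ^+ t).
    by apply: (le_trans h1); rewrite -h3.
  have h7 : 0 < t%:R * delta * q ^+ t by exact: mulr_gt0.
  rewrite mulrBr mulr1; lra.
pose b := C * expR (- (th * (t%:R * s))).
have PE : (P E <= (t%:R * b)%:E)%E.
  apply: le_trans.
    by apply: (@content_subadditive _ _ _ P E F t _ mE sub) => k _.
  apply: (@le_trans _ _ (\sum_(k < t) b%:E)%E).
    by apply: lee_sum => k _; apply: tailk.
  by rewrite sumEFin sumr_const card_ord mulr_natl.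
have key : t%:R * b <= expR (t%:R * (2 - th * s)).
  have e1 : (t%:R : R) <= expR (t%:R : R).
    have h := expR_ge1Dx (t%:R : R); lra.
  have e2 : C <= expR (t%:R : R) by apply: (le_trans _ e1); exact: ltW.
  rewrite /b mulrA (_ : t%:R * (2 - th * s) = t%:R + t%:R + - (th * (t%:R * s)));
    last by ring.
  rewrite !expRD; apply: ler_wpM2r; first exact: expR_ge0.
  by apply: ler_pM => //; apply: ltW.
have lneE : (lne (P E) <= (t%:R * (2 - th * s))%:E)%E.
  rewrite -[X in (_ <= X)%E](expeRK (R:=R)).
  rewrite lee_lne //.
  - by apply: (le_trans PE); rewrite /= lee_fin.
  - by rewrite in_itv /= measure_ge0 leey.
  - by rewrite in_itv /= lee_fin expR_ge0 leey.
apply: le_trans.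
  apply: lee_wpmul2l; first by rewrite lee_fin invr_ge0 ler0n.
  exact: lneE.
rewrite -EFinM lee_fin mulrA mulVf ?gt_eqF // mul1r.
have -> : th * s = `|A| + 2 by rewrite /th divfK // gt_eqF.
have := ler_norm (- A); rewrite normrN; lra.
Qed.
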